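(* Let $\Theta$ and $U$ be compact metric spaces, $\rho:\Theta\to L_1(\mathcal{H})$ a quantum statistical model, and $f:\Theta\times U\to[0,\infty)$ continuous. Put $\kappa_u(\theta):=f(\theta,u)\rho(\theta)$. Then for every $\epsilon>0$ and every compact $K\subseteq\Theta$ there exist a trace-class operator $W$ and $\delta>0$ such that $$-W\le\kappa_u(\theta)-\kappa_u(\eta)\le W\quad\text{for all }(\theta,\eta)\in K_\delta\text{ and all }u\in U,$$ and $\mathrm{Tr}\,W\le\epsilon$.
   Context: $\mathcal{H}$ is a Hilbert space, $L_1(\mathcal{H})$ its trace-class operators; for self-adjoint operators $A\ge B$ means $A-B$ is positive. With $d$ the metric on $\Theta$, for compact $K\subseteq\Theta$ and $\delta>0$ let $K_\delta:=\{(\theta,\eta)\in K\times K: d(\theta,\eta)<\delta\}$. For $T:\Theta\to L_1(\mathcal{H})$ with self-adjoint values, $\omega_T(K_\delta):=\inf\{\|X\|_1: X\in L_1(\mathcal{H}),\ -X\le T(\theta)-T(\eta)\le X\ \forall(\theta,\eta)\in K_\delta\}$, and $T$ is regular if $\lim_{\delta\to0}\omega_T(K_\delta)=0$ for every compact $K$. A quantum statistical model is a map $\rho:\Theta\to L_1(\mathcal{H})$ with $\rho(\theta)\ge0$, $\mathrm{Tr}\,\rho(\theta)=1$, which is injective and regular. *)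

(* Defs.v *)
From HB Require Import structures.
From mathcomp Require Import all_boot all_order all_algebra.
From mathcomp Require Import all_classical all_reals all_analysis.
From mathcomp Require Import complex.

Set Implicit Arguments.
Unset Strict Implicit.
Unset Printing Implicit Defensive.

Import Order.TTheory GRing.Theory Num.Theory.
Import numFieldNormedType.Exports.

Local Open Scope classical_set_scope.
Local Open Scope ring_scope.
Local Open Scope complex_scope.

(* Inner product antilinear in the first and linear in the second slot.   *)
Record HilbertSpace (R : realType) := {
  hs_car :> lmodType R[i] ;
  hs_ip : hs_car -> hs_car -> R[i] ;
  hs_ip_linear : forall (a : R[i]) (x y z : hs_car),
      hs_ip x (a *: y + z) = a * hs_ip x y + hs_ip x z ;
  hs_ip_conj : forall x y : hs_car, hs_ip y x = (hs_ip x y)^* ;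
  hs_ip_ge0 : forall x : hs_car, 0 <= hs_ip x x ;
  hs_ip_eq0 : forall x : hs_car, hs_ip x x = 0 -> x = 0 ;
  hs_complete : forall u : nat -> hs_car,
      (forall e : R, 0 < e -> exists N : nat, forall m n : nat,
          (N <= m)%N -> (N <= n)%N ->
          Num.sqrt (complex.Re (hs_ip (u m - u n) (u m - u n))) < e) ->
      exists l : hs_car, forall e : R, 0 < e -> exists N : nat,
          forall n : nat, (N <= n)%N ->
          Num.sqrt (complex.Re (hs_ip (u n - l) (u n - l))) < e
}.

Section Operators.
Context {R : realType} (H : HilbertSpace R).

Definition ip : H -> H -> R[i] := @hs_ip R H.

Definition hnorm (x : H) : R := Num.sqrt (complex.Re (ip x x)).

Definition bounded_op (A : H -> H) : Prop :=
  (forall (a : R[i]) (x y : H), A (a *: x + y) = a *: A x + A y) /\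
  exists M : R, forall x : H, hnorm (A x) <= M * hnorm x.

Definition self_adjoint (A : H -> H) : Prop :=
  forall x y : H, ip x (A y) = ip (A x) y.

(* positivity A >= 0 : <x, A x> is a nonnegative real for all x *)
Definition psd (A : H -> H) : Prop := forall x : H, 0 <= ip x (A x).

Definition loewner_le (A B : H -> H) : Prop := psd (fun x => B x - A x).

Definition orthonormal_basis (E : set H) : Prop :=
  (forall e, E e -> ip e e = 1) /\
  (forall e e', E e -> E e' -> e <> e' -> ip e e' = 0) /\
  (forall x : H, (forall e, E e -> ip e x = 0) -> x = 0).

(* trace of a positive operator: sum_{e in E} <e, A e>, for an orthonormal
   basis E (basis independent; we take the sup over all bases, which is
   that common value). *)
Definition ptrace (A : H -> H) : \bar R :=
  ereal_sup [set (\esum_(e in E) ((complex.Re (ip e (A e)))%:E))%E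
            | E in orthonormal_basis].

(* positive trace-class operators; for these ||A||_1 = Tr A *)
Definition pos_trace_class (A : H -> H) : Prop :=
  [/\ bounded_op A, psd A & (ptrace A < +oo)%E].

(* omega_T(K_delta) for T : Theta -> operators.  Any X with
   -X <= T th - T et <= X on a nonempty K_delta is positive, so its trace
   norm is its trace. *)
Definition omegaT {Theta : metricType R} (T : Theta -> (H -> H))
    (K : set Theta) (delta : R) : \bar R :=
  ereal_inf [set ptrace X | X in
    [set X | pos_trace_class X /\
      forall th et, K th -> K et -> mdist th et < delta ->
        loewner_le (fun x => - X x) (fun x => T th x - T et x) /\
        loewner_le (fun x => T th x - T et x) X]].

Definition regular_map {Theta : metricType R} (T : Theta -> (H -> H)) : Prop :=
  (forall th, bounded_op (T th) /\ self_adjoint (T th)) /\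
  forall K : set Theta, compact K ->
    omegaT T K delta @[delta --> (0:R)^'+] --> (0%R)%:E.

Definition quantum_model {Theta : metricType R} (rho : Theta -> (H -> H)) : Prop :=
  [/\ forall th, pos_trace_class (rho th),
      forall th, ptrace (rho th) = 1%:E,
      injective rho &
      regular_map rho].

End Operators.

(* Main.v *)
Require Import Defs.
From HB Require Import structures.
From mathcomp Require Import all_boot all_order all_algebra.
From mathcomp Require Import all_classical all_reals all_analysis.
From mathcomp Require Import complex.
From mathcomp Require Import lra ring.
Import Order.TTheory GRing.Theory Num.Theory.
Import numFieldTopology.Exports numFieldNormedType.Exports.
Local Open Scope classical_set_scope.
Local Open Scope ring_scope.
Local Open Scope complex_scope.

Section IP.
Context {R : realType} (H : HilbertSpace R).
Implicit Types (x y z u v : H).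

Lemma ipD2 x y z : ip x (y + z) = ip x y + ip x z.
Proof. by rewrite /ip -(scale1r y) hs_ip_linear mul1r scale1r. Qed.
Lemma ip02 x : ip x 0 = 0.
Proof. by apply: (@addrI _ (ip x 0)); rewrite -ipD2 !addr0. Qed.
Lemma ipZ2 (a : R[i]) x y : ip x (a *: y) = a * ip x y.
Proof. by rewrite /ip -(addr0 (a *: y)) hs_ip_linear -/(ip x 0) ip02 addr0. Qed.
Lemma ipN2 x y : ip x (- y) = - ip x y.
Proof. by rewrite -scaleN1r ipZ2 mulN1r. Qed.
Lemma ipB2 x y z : ip x (y - z) = ip x y - ip x z.
Proof. by rewrite ipD2 ipN2. Qed.
Lemma ipC x y : ip y x = (ip x y)^*.
Proof. exact: hs_ip_conj. Qed.
Lemma ipD1 x y z : ip (x + y) z = ip x z + ip y z.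
Proof. by rewrite ipC ipD2 rmorphD /= -!ipC. Qed.
Lemma ipZ1 (a : R[i]) x y : ip (a *: x) y = a^* * ip x y.
Proof. by rewrite ipC ipZ2 rmorphM /= -!ipC. Qed.
Lemma ipN1 x y : ip (- x) y = - ip x y.
Proof. by rewrite -scaleN1r ipZ1 rmorphN rmorph1 mulN1r. Qed.

Definition nsq (v : H) : R := complex.Re (ip v v).
Lemma nsq_ge0 v : 0 <= nsq v.
Proof. by have := hs_ip_ge0 v; rewrite lecE => /andP[_]. Qed.
Lemma hnorm_ge0 v : 0 <= hnorm v.
Proof. exact: sqrtr_ge0. Qed.
Lemma hnorm_sq v : hnorm v ^+ 2 = nsq v.
Proof. by rewrite /hnorm sqr_sqrtr // nsq_ge0. Qed.
Lemma nsqZ (a : R) v : nsq (a%:C *: v) = a ^+ 2 * nsq v.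
Proof.
rewrite /nsq ipZ1 ipZ2.
by case: (ip v v) => r i; simpc; rewrite expr2 mulrA.
Qed.
Lemma nsqD u v : nsq (u + v) <= 2 * nsq u + 2 * nsq v.
Proof.
have h := nsq_ge0 (u - v).
move: h; rewrite /nsq !ipD1 !ipD2 !ipN1 !ipN2.
case: (ip u u) => r1 i1; case: (ip u v) => r2 i2; case: (ip v u) => r3 i3;
case: (ip v v) => r4 i4; simpc => /= h; lra.
Qed.

Lemma bounded_comb (a b : R) A B : bounded_op A -> bounded_op B ->
  bounded_op (fun x => a%:C *: A x + b%:C *: B x).
Proof.
move=> [LA [MA hA]] [LB [MB hB]]; split.
  move=> k x y; rewrite LA LB !scalerDr !scalerA [k * _]mulrC [k * b%:C]mulrC.
  by rewrite addrACA.
exists (Num.sqrt (2 * a ^+ 2 * MA ^+ 2 + 2 * b ^+ 2 * MB ^+ 2)) => x.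
set K := Num.sqrt _.
have K0 : 0 <= K by exact: sqrtr_ge0.
have n0 := hnorm_ge0 x.
have sA : nsq (A x) <= MA ^+ 2 * nsq x.
  have h0 := hnorm_ge0 (A x); have h1 := hA x.
  rewrite -!hnorm_sq; nra.
have sB : nsq (B x) <= MB ^+ 2 * nsq x.
  have h0 := hnorm_ge0 (B x); have h1 := hB x.
  rewrite -!hnorm_sq; nra.
have sC : nsq (a%:C *: A x + b%:C *: B x) <= K ^+ 2 * nsq x.
  rewrite sqr_sqrtr; last first.
    have := sqr_ge0 a; have := sqr_ge0 b; have := sqr_ge0 MA; have := sqr_ge0 MB; nra.
  apply: le_trans (nsqD _ _) _; rewrite !nsqZ.
  have := ler_wpM2l (sqr_ge0 a) sA; have := ler_wpM2l (sqr_ge0 b) sB.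
  move=> h1 h2.
  have -> : (2 * a ^+ 2 * MA ^+ 2 + 2 * b ^+ 2 * MB ^+ 2) * nsq x =
    2 * (a ^+ 2 * (MA ^+ 2 * nsq x)) + 2 * (b ^+ 2 * (MB ^+ 2 * nsq x)) by ring.
  by apply: lerD; rewrite ler_pM2l.
have h0 := hnorm_ge0 (a%:C *: A x + b%:C *: B x).
move: sC; rewrite -!hnorm_sq => sC.
by rewrite -(@ler_pXn2r _ 2) ?nnegrE ?mulr_ge0 // exprMn.
Qed.

Lemma Re_comb (a b : R) (z w : R[i]) :
  complex.Re (a%:C * z + b%:C * w) = a * complex.Re z + b * complex.Re w.
Proof. by case: z => ? ?; case: w => ? ?; simpc. Qed.

Lemma psd_Re A v : psd A -> 0 <= complex.Re (ip v (A v)).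
Proof. by move=> /(_ v); rewrite lecE => /andP[]. Qed.

Lemma ltry_ub (x : \bar R) : (x < +oo)%E -> exists r : R, (x <= r%:E)%E.
Proof. by case: x => [r _|//|_]; [exists r | exists 0; rewrite leNye]. Qed.

Lemma esum_scale_le (T : choiceType) (E : set T) (g : T -> R) (a : R) :
  0 <= a -> (forall t, 0 <= g t) ->
  (esum E (fun t => (a * g t)%:E) <= a%:E * esum E (fun t => (g t)%:E))%E.
Proof.
move=> a0 g0; apply: ge_ereal_sup => _ [X [finX XE] <-].
rewrite (eq_fsbigr (fun t => (a%:E * (g t)%:E)%E)); last by move=> t _; rewrite EFinM.
rewrite -ge0_mule_fsumr; last by move=> t; rewrite lee_fin.
apply: lee_wpmul2l; first by rewrite lee_fin.
by apply: ereal_sup_ubound; exists X.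
Qed.

Lemma ptrace_comb (a b : R) A B : 0 <= a -> 0 <= b -> psd A -> psd B ->
  (ptrace (fun x => (a%:C *: A x + b%:C *: B x)%R) <=
   a%:E * ptrace A + b%:E * ptrace B)%E.
Proof.
move=> a0 b0 pA pB; apply: ge_ereal_sup => _ [E HE <-].
rewrite (eq_esum (b := fun e => (a * complex.Re (ip e (A e)))%:E +
   (b * complex.Re (ip e (B e)))%:E)); last first.
  by move=> e _; rewrite ipD2 !ipZ2 Re_comb EFinD.
rewrite esumD; last 2 first.
- by move=> e _; rewrite lee_fin mulr_ge0 // psd_Re.
- by move=> e _; rewrite lee_fin mulr_ge0 // psd_Re.
apply: leeD.
  have h := (@esum_scale_le _ E (fun e => complex.Re (ip e (A e))) a a0 (fun e => @psd_Re A e pA)).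
  apply: (le_trans h).
  by apply: lee_wpmul2l; [rewrite lee_fin | apply: ereal_sup_ubound; exists E].
apply: le_trans (@esum_scale_le _ E (fun e => complex.Re (ip e (B e))) b b0 (fun e => @psd_Re B e pB)) _.
by apply: lee_wpmul2l; [rewrite lee_fin | apply: ereal_sup_ubound; exists E].
Qed.

Lemma ptc_comb (a b : R) A B : 0 <= a -> 0 <= b ->
  pos_trace_class A -> pos_trace_class B ->
  pos_trace_class (fun x => a%:C *: A x + b%:C *: B x) /\
  (ptrace (fun x => (a%:C *: A x + b%:C *: B x)%R) <=
   a%:E * ptrace A + b%:E * ptrace B)%E.
Proof.
move=> a0 b0 [bA pA tA] [bB pB tB].
have le := @ptrace_comb a b A B a0 b0 pA pB.
split=> //; split.
- exact: bounded_comb.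
- move=> x; rewrite ipD2 !ipZ2.
  by apply: addr_ge0; apply: mulr_ge0; rewrite ?ler0c.
- apply: le_lt_trans le _.
  have [r1 h1] := ltry_ub _ tA; have [r2 h2] := ltry_ub _ tB.
  apply: (@le_lt_trans _ _ (a%:E * r1%:E + b%:E * r2%:E)%E); last first.
    by rewrite -!EFinM -EFinD ltry.
  by apply: leeD; apply: lee_wpmul2l; rewrite ?lee_fin.
Qed.

Lemma small_X (Theta : metricType R) (T : Theta -> (H -> H)) (K : set Theta) :
  omegaT T K delta @[delta --> (0:R)^'+] --> (0%R)%:E ->
  forall e : R, 0 < e -> exists d : R, exists X : H -> H,
    [/\ 0 < d, pos_trace_class X, (ptrace X < e%:E)%E &
    forall th et, K th -> K et -> mdist th et < d ->
      loewner_le (fun x => - X x) (fun x => T th x - T et x) /\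
      loewner_le (fun x => T th x - T et x) X].
Proof.
move=> hcvg e e0.
have hn : nbhs (0%R)%:E (fun u : \bar R => (u < e%:E)%E).
  by apply: open_ereal_lt'; rewrite lte_fin.
have ev := hcvg _ hn.
near (0:R)^'+ => d.
have d0 : 0 < d by near: d; apply: nbhs_right_gt.
have hd : (omegaT T K d < e%:E)%E by near: d; exact: ev.
have [_ [X [HX1 HX2] <-] lt] := ereal_inf_lt hd.
by exists d, X; split.
Unshelve. all: end_near.
Qed.

Section Yop.
Variable (Theta : eqType) (rho : Theta -> (H -> H)) (X0 : H -> H).

Definition Yop (s : seq Theta) : H -> H :=
  foldr (fun t A => fun x => (1:R)%:C *: A x + (1:R)%:C *: rho t x) X0 s.

Lemma ipYcons a s x : ip x (Yop (a :: s) x) = ip x (Yop s x) + ip x (rho a x).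
Proof. by rewrite /= ipD2 !ipZ2 rmorph1 !mul1r. Qed.

Lemma Yop_ptc (r : R) : pos_trace_class X0 -> (ptrace X0 <= r%:E)%E ->
  (forall t, pos_trace_class (rho t)) -> (forall t, ptrace (rho t) = 1%:E) ->
  forall s, pos_trace_class (Yop s) /\ (ptrace (Yop s) <= (r + (size s)%:R)%:E)%E.
Proof.
move=> p0 h0 pr tr; elim=> [|a s [IH1 IH2]]; first by rewrite addr0.
have [p1 h1] := @ptc_comb 1 1 _ _ ler01 ler01 IH1 (pr a).
split=> //; apply: le_trans h1 _.
rewrite !mul1e tr.
apply: le_trans (leeD IH2 (lexx _)) _.
by rewrite -EFinD lee_fin /= -natr1 addrA.
Qed.

Lemma Yop_dom : (forall t, psd (rho t)) -> forall s x, (0 <= ip x (Yop s x) - ip x (X0 x)) /\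
  forall t, t \in s -> 0 <= ip x (Yop s x) - ip x (X0 x) - ip x (rho t x).
Proof.
move=> pr; elim=> [|a s IH] x.
  by rewrite subrr; split => // t; rewrite in_nil.
have [h1 h2] := IH x; have ha := pr a x.
rewrite ipYcons; split.
  by rewrite addrAC; apply: addr_ge0.
move=> t; rewrite in_cons => /orP[/eqP ->|ts].
  by rewrite addrAC addrK.
have -> : ip x (Yop s x) + ip x (rho a x) - ip x (X0 x) - ip x (rho t x) =
  (ip x (Yop s x) - ip x (X0 x) - ip x (rho t x)) + ip x (rho a x) by ring.
by apply: addr_ge0 => //; apply: h2.
Qed.
End Yop.
End IP.
Lemma core (R : realType) (a a' M c : R) (p q t1 t2 : R[i]) :
  0 <= a -> a <= M -> 0 <= a' -> a - a' <= c -> a' - a <= c ->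
  0 <= p + (t1 - t2) -> 0 <= p - (t1 - t2) -> 0 <= t2 -> 0 <= q - t2 ->
  0 <= (M%:C * p + c%:C * q) - (a%:C * t1 - a'%:C * t2) /\
  0 <= (a%:C * t1 - a'%:C * t2) + (M%:C * p + c%:C * q).
Proof.
case: p => pr pi; case: q => qr qi; case: t1 => r1 i1; case: t2 => r2 i2.
rewrite !lecE /= => a0 aM a'0 h1 h2 /andP[/eqP e1 l1] /andP[/eqP e2 l2]
  /andP[/eqP e3 l3] /andP[/eqP e4 l4].
have hp : 0 <= pr by lra.
have k1 : 0 <= (M - a) * pr by apply: mulr_ge0; lra.
have k2 : 0 <= a * (pr + (r1 - r2)) by apply: mulr_ge0; lra.
have k3 : 0 <= a * (pr - (r1 - r2)) by apply: mulr_ge0; lra.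
have k4 : 0 <= (c - (a - a')) * r2 by apply: mulr_ge0; lra.
have k5 : 0 <= (c - (a' - a)) * r2 by apply: mulr_ge0; lra.
have k6 : 0 <= c * (qr - r2) by apply: mulr_ge0; lra.
have hi2 : i2 = 0 by [].
have hi1 : i1 = 0 by lra.
have hpi : pi = 0 by lra.
have hqi : qi = 0 by lra.
rewrite hi1 hi2 hpi hqi.
split; apply/andP; split; simpc; rewrite ?mulr0 ?addr0 ?subr0 //; nra.
Qed.
Lemma unif_f (R : realType) (Theta U : metricType R) (f : Theta * U -> R) :
  compact [set: Theta * U] -> continuous f -> forall c : R, 0 < c ->
  exists d : R, 0 < d /\ forall th et u, mdist th et < d ->
    `|f (th, u) - f (et, u)| < c.
Proof.
move=> cpt fc c c0.
have := (proj1 (compact_near_coveringP _) cpt) R (0:R)^'+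
  (fun d p => forall et, mdist p.1 et < d -> `|f p - f (et, p.2)| < c) _.
case.
  move=> p0 _.
  have c20 : 0 < c / 2 by rewrite divr_gt0.
  have fp0 : f x @[x --> p0] --> f p0 := fc p0.
  have := cvgr_dist_lt _ _ fp0 _ c20.
  move=> h; have [r /= r0 hr] := (nbhs_ballP _ _).1 (h _).
  exists (ball p0 (r / 2), [set d | d < r / 2]).
    split; first by apply: nbhsx_ballx; rewrite divr_gt0.
    by apply: nbhs_right_lt; rewrite divr_gt0.
  case=> p d /= [bp dl] et het.
  have r2 : r / 2 <= r by rewrite ler_pdivrMr // ler_pMr // ler1n.
  have hp := hr p (le_ball r2 bp).
  have hq : ball p0 r (et, p.2).
    split; last exact: (le_ball r2 bp.2).
    have := bp.1; rewrite /= !ballEmdist /= => h1.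
    apply: le_lt_trans (metric_triangle _ p.1 _) _.
    by rewrite (splitr r); apply: ltrD => //; apply: lt_trans het dl.
  have := hr _ hq => /= hq'.
  rewrite (_ : f p - f (et, p.2) = (f p0 - f (et, p.2)) - (f p0 - f p)); last by ring.
  apply: le_lt_trans (ler_normB _ _) _.
  by rewrite (splitr c); apply: ltrD.
move=> x /= x0 hx.
exists (x / 2); split; first by rewrite divr_gt0.
move=> th et u hd.
apply: (hx (x / 2) _ _ (th, u) Logic.I et hd).
  by rewrite /ball_ /= sub0r normrN gtr0_norm ?divr_gt0 // ltr_pdivrMr // ltr_pMr // ltr1n.
by rewrite divr_gt0.
Qed.
Lemma finite_net (R : realType) (Theta : metricType R) (K : set Theta) (d : R) :
  compact K -> 0 < d ->
  exists s : seq Theta, (forall t, t \in s -> K t) /\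
    forall x, K x -> exists2 t, t \in s & mdist t x < d.
Proof.
move=> cK d0.
pose F := filter_from [set: seq Theta] (fun s0 => [set s : seq Theta | {subset s0 <= s}]).
have FF : Filter F.
  apply: filter_from_filter; first by exists [::].
  move=> s1 s2 _ _; exists (s1 ++ s2) => // s /= hs; split => t ht; apply: hs;
    by rewrite mem_cat ht ?orbT.
have := (proj1 (compact_near_coveringP _) cK) (seq Theta) F
  (fun s x => exists2 t, t \in s & K t /\ mdist t x < d) FF.
case.
  move=> x Kx.
  exists (ball x d, [set s : seq Theta | x \in s]).
    split; first exact: nbhsx_ballx.
    by exists [:: x] => // s /= /(_ x); apply; rewrite inE.
  case=> y s /= [bxy xs]; exists x => //; split => //.
  by move: bxy; rewrite ballEmdist.
move=> s0 _ hs0.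
pose s1 := [seq t <- s0 | `[< K t >]].
exists s1; split.
  by move=> t; rewrite mem_filter => /andP[/asboolP].
move=> x Kx; have [t ts [Kt dt]] := hs0 s0 (fun _ h => h) x Kx.
by exists t => //; rewrite mem_filter ts andbT; apply/asboolP.
Qed.

Lemma f_bound (R : realType) (T : topologicalType) (f : T -> R) :
  compact [set: T] -> continuous f -> exists M : R, 0 <= M /\ forall p, f p <= M.
Proof.
move=> cpt fc.
have [ne|e] := pselect ([set: T] !=set0); last first.
  by exists 0; split => // p; exfalso; apply: e; exists p.
have [c _ hc] := compact_EVT_max ne cpt (continuous_subspaceT fc).
exists (Num.max (f c) 0); split; first by rewrite le_max lexx orbT.
by move=> p; rewrite le_max hc ?in_setT.
Qed.

Theorem lemma4 (R : realType) (H : HilbertSpace R)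
    (Theta U : metricType R)
    (rho : Theta -> (H -> H)) (f : Theta * U -> R) :
  compact [set: Theta] -> compact [set: U] ->
  quantum_model rho ->
  continuous f -> (forall p, 0 <= f p) ->
  let kappa := fun (u : U) (th : Theta) (x : H) => (f (th, u))%:C *: rho th x in
  forall eps : R, 0 < eps ->
  forall K : set Theta, compact K ->
  exists (W : H -> H) (delta : R),
    [/\ 0 < delta, pos_trace_class W,
        (forall th et u, K th -> K et -> mdist th et < delta ->
           loewner_le (fun x => - W x) (fun x => kappa u th x - kappa u et x) /\
           loewner_le (fun x => kappa u th x - kappa u et x) W) &
        (ptrace W <= eps%:E)%E].
Proof.
move=> cT cU [ptcr trr _ [_ regr]] fc f0 kappa eps eps0 K cK.
have [d0 [X0 [d00 pX0 tX0 hX0]]] := small_X H Theta rho K (regr K cK) 1 ltr01.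
have [s [sK snet]] := finite_net _ _ _ _ cK d00.
pose Y := Yop H Theta rho X0 s.
have [pY tY] := Yop_ptc H Theta rho X0 1 pX0 (ltW tX0) ptcr trr s.
pose B : R := 1 + (size s)%:R.
have B0 : 0 <= B by rewrite addr_ge0.
have cTU : compact [set: Theta * U] by rewrite -setXTT; apply: compact_setX.
have [M [M0 hM]] := f_bound _ _ _ cTU fc.
pose M' := M + 1.
have M'0 : 0 < M' by rewrite /M'; lra.
pose c := eps / (2 * (B + 1)).
have c0 : 0 < c by rewrite /c divr_gt0 // mulr_gt0 //; lra.
have [d1 [d10 hd1]] := unif_f _ _ _ _ cTU fc _ c0.
have e2 : 0 < eps / (2 * M') by rewrite divr_gt0 // mulr_gt0.
have [d2 [X [d20 pX tX hX]]] := small_X H Theta rho K (regr K cK) _ e2.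
pose W := fun x => M'%:C *: X x + c%:C *: Y x.
have [pW tW] := @ptc_comb _ H M' c X Y (ltW M'0) (ltW c0) pX pY.
exists W, (Num.min d1 d2); split => //.
- by rewrite lt_min d10.
- move=> th et u Kth Ket.
  rewrite lt_min => /andP[hd1' hd2'].
  have [hXa hXb] := hX th et Kth Ket hd2'.
  have [t ts dt] := snet et Ket.
  have dt' : mdist et t < d0 by rewrite metric_sym.
  have [_ hX0b] := hX0 et t Ket (sK t ts) dt'.
  have hf := hd1 th et u hd1'.
  move: hf; rewrite ltr_norml => /andP[hf1 hf2].
  have psdr : forall t, psd (rho t) by move=> t'; have [] := ptcr t'.
  have hc : forall x, 0 <= ip x (Y x) - ip x (rho et x).
    move=> x; have [_ hy] := Yop_dom H Theta rho X0 psdr s x.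
    have hy1 := hy t ts.
    have hz := hX0b x; rewrite !ipB2 in hz.
    have -> : ip x (Y x) - ip x (rho et x) =
      (ip x (Yop H Theta rho X0 s x) - ip x (X0 x) - ip x (rho t x)) +
      (ip x (X0 x) - (ip x (rho et x) - ip x (rho t x))) by rewrite /Y; ring.
    exact: addr_ge0.
  have hM' : f (th, u) <= M' by have := hM (th, u); rewrite /M'; lra.
  have hc1 : f (th, u) - f (et, u) <= c by lra.
  have hc2 : f (et, u) - f (th, u) <= c by lra.
  split=> x.
    have := hXa x; have := hXb x.
    rewrite /kappa /W !ipB2 !ipN2 opprK ipD2 !ipZ2 => hb ha.
    rewrite addrC in ha.
    have [_ ok] := @core R _ _ _ _ _ (ip x (Y x)) _ _ (f0 (th, u)) hM' (f0 (et, u))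
      hc1 hc2 ha hb (psdr et x) (hc x).
    by rewrite opprK.
  have := hXa x; have := hXb x.
  rewrite /kappa /W !ipB2 !ipN2 opprK ipD2 !ipZ2 => hb ha.
  rewrite addrC in ha.
  have [ok _] := @core R _ _ _ _ _ (ip x (Y x)) _ _ (f0 (th, u)) hM' (f0 (et, u))
    hc1 hc2 ha hb (psdr et x) (hc x).
  exact: ok.
- apply: le_trans tW _.
  have h1 : (M'%:E * ptrace X <= (eps / 2)%:E)%E.
    apply: le_trans (lee_wpmul2l _ (ltW tX)) _; first by rewrite lee_fin ltW.
    rewrite -EFinM lee_fin.
    have -> : M' * (eps / (2 * M')) = eps / 2 by field; rewrite gt_eqF.
    by [].
  have h2 : (c%:E * ptrace Y <= (eps / 2)%:E)%E.
    apply: le_trans (lee_wpmul2l _ tY) _; first by rewrite lee_fin ltW.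
    rewrite -EFinM lee_fin.
    apply: (@le_trans _ _ (c * (B + 1))).
      rewrite ler_wpM2l ?ltW // /B; lra.
    rewrite le_eqVlt; apply/orP; left; apply/eqP; rewrite /c; field.
    by rewrite gt_eqF //; lra.
  by apply: le_trans (leeD h1 h2) _; rewrite -EFinD -splitr.
Qed.
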